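(* Let $\mu$ be a $\mathbb{B}$-module. The following are equivalent: (1) $\mu$ is projective; (2) $\mu$ is isomorphic to the free $\mathbb{B}$-module $\mathbb{B}(S,\leq)$ on some lower finite poset $(S,\leq)$; (3) $\mu$ has unique irredundant primitive decompositions, and the set $\mathrm{Prim}\,\mu$ of primitive elements of $\mu$, with the partial order induced from $\mu$, is lower finite.
   Context: $\mathbb{B}=\{-\infty,0\}$ is the Boolean semifield (idempotent semiring with addition $\vee=\max$). A $\mathbb{B}$-module is a set $\mu$ with an associative, commutative, idempotent operation $\vee$ having a neutral element $-\infty$; equivalently a poset ($x\le y$ iff $x\vee y=y$) with a least element and all finite joins. Homomorphisms preserve finite joins (including the empty join $-\infty$). The free $\mathbb{B}$-module on a set $S$ is the set of finite subsets of $S$ under union. A module is projective if every surjective homomorphism onto it admits a section (equivalently, it is a retract of a free module). For a poset $(S,\le)$, $\mathbb{B}(S,\le)$ is the set of lower subsets of $S$ which are the downward closure of a finite subset, with operation union; it is the free $\mathbb{B}$-module on the poset. A poset is lower finite if every principal lower set $S_{\le X}=\{Y\in S: Y\le X\}$ is finite. An element $X\in\mu$ is primitive if whenever $X=\bigvee_{i\in I}X_i$ with $I$ finite, then $X=X_i$ for some $i$ (so $-\infty$ is never primitive). An irredundant primitive decomposition of $X\in\mu$ is an expression $X=\bigvee F$ with $F$ a finite set of primitive elements that are pairwise incomparable. $\mu$ has unique irredundant primitive decompositions if every element of $\mu$ has exactly one irredundant primitive decomposition; equivalently, the map $\mathbb{B}(\mathrm{Prim}\,\mu,\le)\to\mu$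 sending the downward closure of a finite set $F$ to $\bigvee F$ is bijective. *)

(* Defs.v *)
(* B-modules (= join-semilattices with bottom) as a record. *)
From Stdlib Require Import List FunctionalExtensionality PropExtensionality ProofIrrelevance.
Import ListNotations.

Record bmodule := BModule {
  car :> Type;
  bjoin : car -> car -> car;
  bbot : car;
  bjoinA : forall x y z, bjoin x (bjoin y z) = bjoin (bjoin x y) z;
  bjoinC : forall x y, bjoin x y = bjoin y x;
  bjoinI : forall x, bjoin x x = x;
  bjoin0 : forall x, bjoin bbot x = x
}.

Arguments bjoin {b} _ _.
Arguments bbot {b}.

Definition bigjoin {M : bmodule} (l : list M) : M := fold_right bjoin bbot l.

Definition ble {M : bmodule} (x y : M) : Prop := bjoin x y = y.

Definition is_hom {M N : bmodule} (f : M -> N) : Prop :=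
  (forall x y, f (bjoin x y) = bjoin (f x) (f y)) /\ f bbot = bbot.

Definition surjective {A B : Type} (f : A -> B) : Prop := forall y, exists x, f x = y.

Definition projective (M : bmodule) : Prop :=
  forall (N : bmodule) (p : N -> M), is_hom p -> surjective p ->
    exists s : M -> N, is_hom s /\ forall x, p (s x) = x.

Definition isomorphic (M N : bmodule) : Prop :=
  exists (f : M -> N) (g : N -> M), is_hom f /\
    (forall x, g (f x) = x) /\ (forall y, f (g y) = y).

Record is_poset (S : Type) (le : S -> S -> Prop) : Prop := {
  po_refl : forall x, le x x;
  po_antisym : forall x y, le x y -> le y x -> x = y;
  po_trans : forall x y z, le x y -> le y z -> le x z
}.

Definition lower_finite (S : Type) (le : S -> S -> Prop) : Prop :=
  forall x, exists l : list S, forall y, le y x -> In y l.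

(* B(S,<=): lower subsets of S that are the downward closure of a finite subset *)
Definition fgl (S : Type) (le : S -> S -> Prop) : Type :=
  { A : S -> Prop | exists l : list S, forall x, A x <-> exists y, In y l /\ le x y }.

Lemma fgl_ext (S : Type) (le : S -> S -> Prop) (A B : fgl S le) :
  (forall x, proj1_sig A x <-> proj1_sig B x) -> A = B.
Proof.
  destruct A as [A HA], B as [B HB]; simpl; intro H.
  assert (A = B) by (apply functional_extensionality; intro x;
                     apply propositional_extensionality; apply H).
  subst B. f_equal. apply proof_irrelevance.
Qed.

Definition fgl_join (S : Type) (le : S -> S -> Prop) (A B : fgl S le) : fgl S le.
Proof.
  refine (exist _ (fun x => proj1_sig A x \/ proj1_sig B x) _).
  destruct (proj2_sig A) as [l1 H1], (proj2_sig B) as [l2 H2].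
  exists (l1 ++ l2); intro x; rewrite H1, H2; split.
  - intros [[y [Hy Hl]]|[y [Hy Hl]]]; exists y; split; auto; apply in_or_app; auto.
  - intros [y [Hy Hl]]; apply in_app_or in Hy as [Hy|Hy]; [left|right]; exists y; auto.
Defined.

Definition fgl_bot (S : Type) (le : S -> S -> Prop) : fgl S le.
Proof.
  refine (exist _ (fun _ => False) _).
  exists []; intro x; split; [contradiction|intros [y [[] _]]].
Defined.

Definition freeB (S : Type) (le : S -> S -> Prop) : bmodule.
Proof.
  refine (@BModule (fgl S le) (@fgl_join S le) (fgl_bot S le) _ _ _ _);
  intros; apply fgl_ext; simpl; tauto.
Defined.

Definition primitive {M : bmodule} (X : M) : Prop :=
  forall l : list M, X = bigjoin l -> exists Y, In Y l /\ X = Y.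

Definition irr_prim_decomp {M : bmodule} (X : M) (F : list M) : Prop :=
  (forall Y, In Y F -> primitive Y) /\
  (forall Y Z, In Y F -> In Z F -> ble Y Z -> Y = Z) /\
  X = bigjoin F.

Definition unique_irr_prim_decomp (M : bmodule) : Prop :=
  forall X : M, (exists F, irr_prim_decomp X F) /\
    (forall F F', irr_prim_decomp X F -> irr_prim_decomp X F' ->
       forall Y, In Y F <-> In Y F').

Definition prim_lower_finite (M : bmodule) : Prop :=
  forall X : M, primitive X ->
    exists l : list M, forall Y, primitive Y -> ble Y X -> In Y l.

(* Main.v *)
Require Import Defs.
From Stdlib Require Import List Lia.
From Stdlib Require Import Classical ClassicalEpsilon FunctionalExtensionality PropExtensionality ProofIrrelevance.
Import ListNotations.

Lemma ble_refl {M : bmodule} (x : M) : ble x x.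
Proof. apply bjoinI. Qed.

Lemma ble_antisym {M : bmodule} (x y : M) : ble x y -> ble y x -> x = y.
Proof. unfold ble; intros H1 H2. rewrite <- H2, bjoinC. exact H1. Qed.

Lemma ble_trans {M : bmodule} (x y z : M) : ble x y -> ble y z -> ble x z.
Proof. unfold ble; intros H1 H2. rewrite <- H2, bjoinA, H1. reflexivity. Qed.

Lemma ble_join_l {M : bmodule} (x y : M) : ble x (bjoin x y).
Proof. unfold ble. rewrite bjoinA, bjoinI. reflexivity. Qed.

Lemma ble_join_r {M : bmodule} (x y : M) : ble y (bjoin x y).
Proof. rewrite bjoinC. apply ble_join_l. Qed.

Lemma join_lub {M : bmodule} (x y z : M) : ble x z -> ble y z -> ble (bjoin x y) z.
Proof. unfold ble; intros H1 H2. rewrite <- bjoinA, H2. exact H1. Qed.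

Lemma ble_bot {M : bmodule} (x : M) : ble bbot x.
Proof. apply bjoin0. Qed.

Lemma ble_bot_eq {M : bmodule} (x : M) : ble x bbot -> x = bbot.
Proof. unfold ble; intro H. rewrite bjoinC, bjoin0 in H. exact H. Qed.

Lemma join_bot_r {M : bmodule} (x : M) : bjoin x bbot = x.
Proof. rewrite bjoinC; apply bjoin0. Qed.

Lemma bigjoin_nil {M : bmodule} : bigjoin (@nil M) = bbot. Proof. reflexivity. Qed.
Lemma bigjoin_cons {M : bmodule} (a : M) l : bigjoin (a :: l) = bjoin a (bigjoin l).
Proof. reflexivity. Qed.

Lemma bigjoin_app {M : bmodule} (l1 l2 : list M) :
  bigjoin (l1 ++ l2) = bjoin (bigjoin l1) (bigjoin l2).
Proof.
  induction l1 as [|a l1 IH]; cbn [app].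
  - rewrite bigjoin_nil, bjoin0. reflexivity.
  - rewrite !bigjoin_cons, IH, bjoinA. reflexivity.
Qed.

Lemma bigjoin_ub {M : bmodule} (l : list M) y : In y l -> ble y (bigjoin l).
Proof.
  induction l as [|a l IH]; cbn [In]; intros H; [contradiction|].
  rewrite bigjoin_cons. destruct H as [<-|H].
  - apply ble_join_l.
  - eapply ble_trans; [apply IH, H|apply ble_join_r].
Qed.

Lemma bigjoin_lub {M : bmodule} (l : list M) z :
  (forall y, In y l -> ble y z) -> ble (bigjoin l) z.
Proof.
  induction l as [|a l IH]; intros H.
  - apply ble_bot.
  - rewrite bigjoin_cons. apply join_lub; [apply H; left; auto|apply IH; intros; apply H; right; auto].
Qed.

Lemma bigjoin_sub {M : bmodule} (l l' : list M) :
  (forall y, In y l -> In y l') -> ble (bigjoin l) (bigjoin l').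
Proof. intros H. apply bigjoin_lub. intros y Hy. apply bigjoin_ub, H, Hy. Qed.

Lemma bigjoin_seteq {M : bmodule} (l l' : list M) :
  (forall y, In y l <-> In y l') -> bigjoin l = bigjoin l'.
Proof. intros H. apply ble_antisym; apply bigjoin_sub; firstorder. Qed.

Lemma bigjoin_map_seteq {A : Type} {M : bmodule} (c : A -> M) (l l' : list A) :
  (forall y, In y l <-> In y l') -> bigjoin (map c l) = bigjoin (map c l').
Proof.
  intros H. apply bigjoin_seteq. intros y. rewrite !in_map_iff. firstorder.
Qed.

Lemma empty_list {A : Type} (l : list A) : (forall x, ~ In x l) -> l = [].
Proof. destruct l as [|a l]; [reflexivity|]. intros H; exfalso; apply (H a); left; auto. Qed.

Definition dec (P : Prop) : bool := if excluded_middle_informative P then true else false.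
Lemma dec_true (P : Prop) : dec P = true <-> P.
Proof. unfold dec. destruct (excluded_middle_informative P); split; auto; discriminate. Qed.

Definition filterP {A : Type} (P : A -> Prop) (l : list A) : list A := filter (fun x => dec (P x)) l.
Lemma filterP_In {A : Type} (P : A -> Prop) l x : In x (filterP P l) <-> In x l /\ P x.
Proof. unfold filterP. rewrite filter_In, dec_true. tauto. Qed.

Definition eqdec {A : Type} (x y : A) : {x = y} + {x <> y} := excluded_middle_informative (x = y).

Lemma enum_exists {A : Type} (P : A -> Prop) (L : list A) :
  (forall x, P x -> In x L) -> exists l, forall x, P x <-> In x l.
Proof. intros H. exists (filterP P L). intros x. rewrite filterP_In. firstorder. Qed.

Fixpoint subs {A : Type} (l : list A) : list (list A) :=
  match l with
  | [] => [[]]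
  | a :: l => map (cons a) (subs l) ++ subs l
  end.

Lemma filter_in_subs {A : Type} (f : A -> bool) l : In (filter f l) (subs l).
Proof.
  induction l as [|a l IH]; simpl; [auto|].
  apply in_or_app. destruct (f a); [left; apply in_map; auto | right; auto].
Qed.

Definition blt {M : bmodule} (x y : M) := ble x y /\ x <> y.

Lemma acc_aux {M : bmodule} : forall n (x : M) l, length l <= n ->
  (forall y, blt y x -> In y l) -> Acc blt x.
Proof.
  induction n as [|n IH]; intros x l Hl H.
  - constructor. intros y Hy. destruct l; [destruct (H y Hy)|simpl in Hl; inversion Hl].
  - constructor. intros y Hy.
    apply IH with (l := remove eqdec y l).
    + pose proof (remove_length_lt eqdec l y (H y Hy)). lia.
    + intros z [Hzy Hz]. apply in_in_remove; [exact Hz|].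
      apply H. split; [eapply ble_trans; [exact Hzy|apply Hy]|].
      intros ->. apply Hz. apply ble_antisym; [exact Hzy|apply Hy].
Qed.

Lemma acc_all {M : bmodule} (LF : forall x : M, exists L, forall y, ble y x -> In y L) :
  forall x : M, Acc blt x.
Proof.
  intros x. destruct (LF x) as [L HL]. apply (acc_aux (length L) x L); [auto|].
  intros y [Hy _]; auto.
Qed.

Lemma combine_decomp {M : bmodule} (l : list M) :
  (forall Y, In Y l -> exists F, (forall Z, In Z F -> primitive Z) /\ Y = bigjoin F) ->
  exists F, (forall Z, In Z F -> primitive Z) /\ bigjoin l = bigjoin F.
Proof.
  induction l as [|a l IH]; intros H.
  - exists []. split; [intros Z []|reflexivity].
  - destruct (H a (or_introl eq_refl)) as [Fa [Ha Ea]].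
    destruct IH as [F [HF EF]]; [intros; apply H; right; auto|].
    exists (Fa ++ F). split.
    + intros Z HZ; apply in_app_or in HZ as [HZ|HZ]; auto.
    + rewrite bigjoin_cons, bigjoin_app, <- Ea, <- EF. reflexivity.
Qed.

Lemma decomp_prim {M : bmodule} (LF : forall x : M, exists L, forall y, ble y x -> In y L) :
  forall x : M, exists F, (forall Y, In Y F -> primitive Y) /\ x = bigjoin F.
Proof.
  intros x. induction (acc_all LF x) as [x _ IH].
  destruct (classic (primitive x)) as [Hp|Hn].
  - exists [x]. split; [intros Y [<-|[]]; auto|]. rewrite bigjoin_cons, bigjoin_nil, join_bot_r. reflexivity.
  - unfold primitive in Hn. apply not_all_ex_not in Hn as [l Hl].
    apply imply_to_and in Hl as [Ex Hl].
    destruct (combine_decomp l) as [F [HF EF]].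
    + intros Y HY. apply IH. split.
      * rewrite Ex. apply bigjoin_ub, HY.
      * intros E. apply Hl. exists Y; auto.
    + exists F. split; auto. rewrite Ex; exact EF.
Qed.

Lemma reduce_aux {M : bmodule} : forall n (F : list M), length F <= n ->
  exists G, (forall Y, In Y G -> In Y F) /\
    (forall Y Z, In Y G -> In Z G -> ble Y Z -> Y = Z) /\ bigjoin G = bigjoin F.
Proof.
  induction n as [|n IH]; intros F Hl.
  - destruct F; [|simpl in Hl; lia]. exists []. split; [auto|split; [intros Y Z []|reflexivity]].
  - destruct (classic (exists Y Z, In Y F /\ In Z F /\ ble Y Z /\ Y <> Z)) as [[Y [Z [HY [HZ [Hle Hne]]]]]|Hno].
    + destruct (IH (remove eqdec Y F)) as [G [HG1 [HG2 HG3]]].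
      { pose proof (remove_length_lt eqdec F Y HY). simpl in Hl; lia. }
      exists G. split; [|split; [exact HG2|]].
      * intros W HW. apply HG1 in HW. apply in_remove in HW. tauto.
      * rewrite HG3. apply ble_antisym.
        -- apply bigjoin_sub. intros W HW. apply in_remove in HW; tauto.
        -- apply bigjoin_lub. intros W HW. destruct (classic (W = Y)) as [->|HWY].
           ++ eapply ble_trans; [exact Hle|]. apply bigjoin_ub, in_in_remove; auto.
           ++ apply bigjoin_ub, in_in_remove; auto.
    + exists F. split; [auto|split; [|reflexivity]].
      intros Y Z HY HZ Hle. destruct (classic (Y = Z)) as [|Hne]; auto.
      exfalso; apply Hno; exists Y, Z; auto.
Qed.

Lemma reduce {M : bmodule} (F : list M) :
  exists G, (forall Y, In Y G -> In Y F) /\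
    (forall Y Z, In Y G -> In Z G -> ble Y Z -> Y = Z) /\ bigjoin G = bigjoin F.
Proof. apply (reduce_aux (length F)); auto. Qed.

Lemma bot_not_prim {M : bmodule} : ~ primitive (@bbot M).
Proof. intros H. destruct (H [] eq_refl) as [Y [[] _]]. Qed.

Lemma props_from {M : bmodule}
  (LF : forall x : M, exists L, forall y, ble y x -> In y L)
  (JP : forall (x : M) F, primitive x -> ble x (bigjoin F) -> exists Y, In Y F /\ ble x Y) :
  unique_irr_prim_decomp M /\ prim_lower_finite M.
Proof.
  split.
  - intros X. split.
    + destruct (decomp_prim LF X) as [F [HF EF]].
      destruct (reduce F) as [G [G1 [G2 G3]]].
      exists G. split; [auto|split; [auto|congruence]].
    + assert (Hs : forall F F', irr_prim_decomp X F -> irr_prim_decomp X F' ->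
                forall Y, In Y F -> In Y F').
      { intros F F' [P1 [I1 E1]] [P2 [I2 E2]] Y HY.
        destruct (JP Y F' (P1 Y HY)) as [Z [HZ HYZ]].
        { rewrite <- E2, E1. apply bigjoin_ub, HY. }
        destruct (JP Z F (P2 Z HZ)) as [Y' [HY' HZY]].
        { rewrite <- E1, E2. apply bigjoin_ub, HZ. }
        assert (Y = Y') by (apply I1; auto; eapply ble_trans; eauto). subst Y'.
        assert (Y = Z) by (apply ble_antisym; auto). subst; auto. }
      intros F F' H1 H2 Y; split; apply Hs; auto.
  - intros X _. destruct (LF X) as [L HL]. exists L. intros Y _ HY; auto.
Qed.

Definition enumF {M : bmodule} (A : fgl M (@eq M)) : list M :=
  proj1_sig (constructive_indefinite_description _ (proj2_sig A)).

Lemma enumF_spec {M : bmodule} (A : fgl M (@eq M)) x : proj1_sig A x <-> In x (enumF A).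
Proof.
  unfold enumF. destruct (constructive_indefinite_description _ _) as [l Hl]. simpl.
  rewrite Hl. split; [intros [y [Hy ->]]; auto|intros H; exists x; auto].
Qed.

Definition pF {M : bmodule} (A : freeB M (@eq M)) : M := bigjoin (enumF A).

Lemma pF_hom {M : bmodule} : is_hom (@pF M).
Proof.
  split.
  - intros A B. unfold pF. rewrite <- bigjoin_app. apply bigjoin_seteq. intros y.
    rewrite in_app_iff, <- !enumF_spec. simpl. tauto.
  - unfold pF. rewrite (empty_list (enumF _)); [reflexivity|].
    intros x Hx. apply enumF_spec in Hx. exact Hx.
Qed.

Definition singleF {M : bmodule} (y : M) : freeB M (@eq M) :=
  exist _ (fun x => exists z, In z [y] /\ x = z) (ex_intro _ [y] (fun x => iff_refl _)).

Lemma pF_surj {M : bmodule} : surjective (@pF M).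
Proof.
  intros y. exists (singleF y). unfold pF.
  transitivity (bigjoin [y]).
  - apply bigjoin_seteq. intros x. rewrite <- enumF_spec. simpl.
    split; [intros [z [Hz ->]]; auto|intros H; exists x; auto].
  - rewrite bigjoin_cons, bigjoin_nil, join_bot_r. reflexivity.
Qed.

Lemma proj_to_props (M : bmodule) : projective M -> unique_irr_prim_decomp M /\ prim_lower_finite M.
Proof.
  intros HP. destruct (HP (freeB M (@eq M)) pF pF_hom pF_surj) as [s [[Hj Hb] Hps]].
  assert (F1 : forall x y z, ble x y -> proj1_sig (s x) z -> proj1_sig (s y) z).
  { intros x y z H Hm. unfold ble in H. pose proof (Hj x y) as E. rewrite H in E.
    rewrite E. simpl. left; exact Hm. }
  assert (F2 : forall x z, proj1_sig (s x) z -> ble z x).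
  { intros x z Hm. rewrite <- (Hps x). unfold pF. apply bigjoin_ub. apply enumF_spec, Hm. }
  assert (F3 : forall x, primitive x -> proj1_sig (s x) x).
  { intros x Hx. destruct (Hx (enumF (s x))) as [Y [HY ->]].
    - rewrite <- (Hps x) at 1. reflexivity.
    - apply enumF_spec, HY. }
  assert (F4 : forall F z, proj1_sig (s (bigjoin F)) z -> exists Y, In Y F /\ proj1_sig (s Y) z).
  { induction F as [|a F IH]; intros z H.
    - rewrite bigjoin_nil, Hb in H. simpl in H. contradiction.
    - rewrite bigjoin_cons, Hj in H. simpl in H. destruct H as [H|H].
      + exists a; split; [left|]; auto.
      + destruct (IH z H) as [Y [HY HY']]. exists Y; split; [right|]; auto. }
  apply props_from.
  - intros x. exists (map bigjoin (subs (enumF (s x)))). intros y Hy.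
    apply in_map_iff. exists (filterP (fun z => proj1_sig (s y) z) (enumF (s x))). split.
    + transitivity (pF (s y)); [|apply Hps]. unfold pF. apply bigjoin_seteq. intros z.
      rewrite filterP_In, <- !enumF_spec. split; [tauto|].
      intros H; split; [eapply F1; eauto|exact H].
    + apply filter_in_subs.
  - intros x F Hx Hle. destruct (F4 F x) as [Y [HY HYx]].
    + eapply F1; [exact Hle|]. apply F3, Hx.
    + exists Y; split; auto.
Qed.

Lemma proj_transport (M T : bmodule) (f : M -> T) (g : T -> M) :
  is_hom f -> (forall x, g (f x) = x) -> (forall y, f (g y) = y) ->
  projective T -> projective M.
Proof.
  intros [fj fb] gf fg HT N p [pj pb] ps.
  destruct (HT N (fun n => f (p n))) as [sg [[sj sb] Hs]].
  - split; [intros; rewrite pj, fj; reflexivity|rewrite pb, fb; reflexivity].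
  - intros y. destruct (ps (g y)) as [n Hn]. exists n. rewrite Hn, fg. reflexivity.
  - exists (fun x => sg (f x)). split; [split|].
    + intros x y. rewrite fj, sj. reflexivity.
    + rewrite fb, sb. reflexivity.
    + intros x. rewrite <- (gf (p (sg (f x)))), Hs, gf. reflexivity.
Qed.

Definition principal {S : Type} {le : S -> S -> Prop} (s : S) : freeB S le :=
  exist _ (fun x => exists y, In y [s] /\ le x y) (ex_intro _ [s] (fun x => iff_refl _)).

Lemma fgl_enum {S : Type} {le : S -> S -> Prop} (LF : lower_finite S le) (A : fgl S le) :
  exists l, forall x, proj1_sig A x <-> In x l.
Proof.
  destruct (proj2_sig A) as [l0 Hl0].
  assert (HL : exists L, forall x, (exists y, In y l0 /\ le x y) -> In x L).
  { clear Hl0. induction l0 as [|a l0 IH].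
    - exists []. intros x [y [[] _]].
    - destruct IH as [L HL]. destruct (LF a) as [La HLa]. exists (La ++ L).
      intros x [y [[<-|Hy] Hxy]]; apply in_or_app; [left; auto|right; apply HL; eauto]. }
  destruct HL as [L HL]. apply (enum_exists _ L). intros x Hx. apply HL, Hl0, Hx.
Qed.

Lemma hom_bigjoin {M N : bmodule} (p : M -> N) (l : list M) :
  is_hom p -> p (bigjoin l) = bigjoin (map p l).
Proof.
  intros [pj pb]. induction l as [|a l IH]; [exact pb|].
  cbn [map]. rewrite !bigjoin_cons, pj, IH. reflexivity.
Qed.

Lemma principal_bigjoin {S : Type} {le : S -> S -> Prop} (l : list S) x :
  proj1_sig (bigjoin (M := freeB S le) (map principal l)) x <-> exists y, In y l /\ le x y.
Proof.
  induction l as [|a l IH].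
  - simpl. split; [contradiction|intros [y [[] _]]].
  - cbn [map]. rewrite bigjoin_cons. simpl. rewrite IH. split.
    + intros [[y [[<-|[]] H]]|[y [Hy H]]]; eauto.
    + intros [y [[<-|Hy] H]]; [left; exists a; auto|right; eauto].
Qed.

Lemma free_proj (S : Type) (le : S -> S -> Prop) :
  is_poset S le -> lower_finite S le -> projective (freeB S le).
Proof.
  intros PO LF N p ph ps.
  pose (c := fun s : S => proj1_sig (constructive_indefinite_description _ (ps (principal s)))).
  assert (Hc : forall s, p (c s) = principal s).
  { intros s0. unfold c. destruct (constructive_indefinite_description _ _); auto. }
  pose (en := fun A : fgl S le => proj1_sig (constructive_indefinite_description _ (fgl_enum LF A))).
  assert (Hen : forall A x, proj1_sig A x <-> In x (en A)).
  { intros A x. unfold en. destruct (constructive_indefinite_description _ _); auto. }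
  exists (fun A => bigjoin (map c (en A))). split; [split|].
  - intros A B. rewrite <- bigjoin_app, <- map_app. apply bigjoin_map_seteq.
    intros x. rewrite in_app_iff, <- !Hen. simpl. tauto.
  - rewrite (empty_list (en _)); [reflexivity|]. intros x Hx. apply Hen in Hx. exact Hx.
  - intros A. rewrite hom_bigjoin by exact ph. rewrite map_map.
    rewrite (map_ext _ _ Hc). apply fgl_ext. intros x. rewrite principal_bigjoin.
    split.
    + intros [y [Hy Hxy]]. apply Hen in Hy.
      destruct (proj2_sig A) as [l0 Hl0]. apply Hl0. apply Hl0 in Hy as [z [Hz Hyz]].
      exists z; split; auto. eapply (po_trans _ _ PO); eauto.
    + intros Hx. exists x. split; [apply Hen, Hx|apply (po_refl _ _ PO)].
Qed.

Lemma JP_irr {M : bmodule} (U : unique_irr_prim_decomp M) (s : M) (G : list M) :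
  primitive s -> (forall Y, In Y G -> primitive Y) ->
  (forall Y Z, In Y G -> In Z G -> ble Y Z -> Y = Z) ->
  ble s (bigjoin G) -> exists g, In g G /\ ble s g.
Proof.
  intros Hs HP HI Hle. destruct (classic (exists g, In g G /\ ble s g)) as [|Hno]; auto.
  exfalso. set (G' := filterP (fun g => ~ ble g s) G).
  assert (D1 : irr_prim_decomp (bigjoin G) G) by (split; auto).
  assert (D2 : irr_prim_decomp (bigjoin G) (s :: G')).
  { split; [|split].
    - intros Y [<-|HY]; auto. apply filterP_In in HY; apply HP; tauto.
    - intros Y Z [<-|HY] [<-|HZ] H; auto.
      + exfalso; apply Hno; exists Z; split; auto. apply filterP_In in HZ; tauto.
      + exfalso. apply filterP_In in HY; tauto.
      + apply filterP_In in HY. apply filterP_In in HZ. apply HI; tauto.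
    - rewrite bigjoin_cons. apply ble_antisym.
      + apply bigjoin_lub. intros g Hg. destruct (classic (ble g s)) as [H|H].
        * eapply ble_trans; [exact H|apply ble_join_l].
        * eapply ble_trans; [|apply ble_join_r]. apply bigjoin_ub, filterP_In; auto.
      + apply join_lub; auto. apply bigjoin_sub. intros g Hg; apply filterP_In in Hg; tauto. }
  destruct (U (bigjoin G)) as [_ Hu].
  assert (InG : In s G) by (apply (Hu _ _ D2 D1); left; auto).
  apply Hno. exists s; split; auto. apply ble_refl.
Qed.

Lemma JP_gen {M : bmodule} (U : unique_irr_prim_decomp M) (s : M) (F : list M) :
  primitive s -> (forall Y, In Y F -> primitive Y) ->
  ble s (bigjoin F) -> exists g, In g F /\ ble s g.
Proof.
  intros Hs HP Hle. destruct (reduce F) as [G [G1 [G2 G3]]].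
  destruct (JP_irr U s G) as [g [Hg Hsg]]; auto.
  - rewrite G3; auto.
  - exists g; auto.
Qed.

Definition PS (M : bmodule) := {x : M | primitive x}.
Definition PSle (M : bmodule) (a b : PS M) : Prop := ble (proj1_sig a) (proj1_sig b).

Definition liftS {M : bmodule} (L : list M) : list (PS M) :=
  fold_right (fun m acc => match excluded_middle_informative (primitive m) with
                           | left H => exist _ m H :: acc | right _ => acc end) [] L.

Lemma liftS_in {M : bmodule} (L : list M) (y : PS M) : In (proj1_sig y) L -> In y (liftS L).
Proof.
  destruct y as [m Hm]. simpl. induction L as [|a L IH]; [intros []|].
  intros H. simpl. destruct (excluded_middle_informative (primitive a)) as [Ha|Ha].
  - destruct H as [->|H]; [left|right; auto]. f_equal. apply proof_irrelevance.
  - destruct H as [->|H]; [contradiction|auto].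
Qed.

Lemma liftS_in2 {M : bmodule} (L : list M) (y : PS M) : In y (liftS L) -> In (proj1_sig y) L.
Proof.
  induction L as [|a L IH]; [intros []|]. simpl.
  destruct (excluded_middle_informative (primitive a)) as [Ha|Ha].
  - intros [<-|H]; [left; reflexivity|right; auto].
  - intros H; right; auto.
Qed.

Lemma props_to_free (M : bmodule) : unique_irr_prim_decomp M /\ prim_lower_finite M ->
  exists (S : Type) (le : S -> S -> Prop),
    is_poset S le /\ lower_finite S le /\ isomorphic M (freeB S le).
Proof.
  intros [U PLF]. exists (PS M), (PSle M). split; [|split].
  - split; unfold PSle.
    + intros; apply ble_refl.
    + intros [x Hx] [y Hy] H1 H2. simpl in *. assert (x = y) by (apply ble_antisym; auto).
      subst. f_equal. apply proof_irrelevance.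
    + intros x y z; apply ble_trans.
  - intros [x Hx]. destruct (PLF x Hx) as [L HL]. exists (liftS L).
    intros [y Hy] H. apply liftS_in. simpl. apply HL; auto.
  - assert (Hf : forall x : M, exists l : list (PS M), forall s : PS M,
               ble (proj1_sig s) x <-> exists y, In y l /\ PSle M s y).
    { intros x. destruct (U x) as [[G [GP [GI GE]]] _]. exists (liftS G). intros [s Hs]. unfold PSle; simpl.
      split.
      - intros H. rewrite GE in H. destruct (JP_irr U s G Hs GP GI H) as [g [Hg Hsg]].
        exists (exist _ g (GP g Hg)). split; auto. apply liftS_in; auto.
      - intros [y [Hy H]]. apply liftS_in2 in Hy. eapply ble_trans; [exact H|].
        rewrite GE. apply bigjoin_ub; auto. }
    pose (f := fun x : M => (exist _ (fun s : PS M => ble (proj1_sig s) x) (Hf x) : freeB (PS M) (PSle M))).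
    pose (gl := fun A : fgl (PS M) (PSle M) => proj1_sig (constructive_indefinite_description _ (proj2_sig A))).
    assert (Hgl : forall A s, proj1_sig A s <-> exists y, In y (gl A) /\ PSle M s y).
    { intros A s. unfold gl. destruct (constructive_indefinite_description _ _); auto. }
    pose (g := fun A : freeB (PS M) (PSle M) => bigjoin (map (@proj1_sig _ _) (gl A))).
    assert (GP : forall l : list (PS M), forall Y, In Y (map (@proj1_sig _ _) l) -> primitive Y).
    { intros l Y HY. apply in_map_iff in HY as [[y Hy] [<- _]]. exact Hy. }
    exists f, g. split; [split|split].
    + intros x y. apply fgl_ext. intros s. simpl. split.
      * intros H. destruct (U x) as [[Gx [Px [_ Ex]]] _]. destruct (U y) as [[Gy [Py [_ Ey]]] _].
        rewrite Ex, Ey, <- bigjoin_app in H.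
        destruct (JP_gen U (proj1_sig s) (Gx ++ Gy) (proj2_sig s)) as [Y [HY HsY]]; auto.
        { intros Y HY; apply in_app_or in HY as [HY|HY]; auto. }
        apply in_app_or in HY as [HY|HY]; [left|right]; eapply ble_trans; eauto.
        -- rewrite Ex; apply bigjoin_ub; auto.
        -- rewrite Ey; apply bigjoin_ub; auto.
      * intros [H|H]; eapply ble_trans; eauto; [apply ble_join_l|apply ble_join_r].
    + apply fgl_ext. intros s. simpl. split; [|contradiction].
      intros H. apply ble_bot_eq in H. apply (@bot_not_prim M). rewrite <- H. apply (proj2_sig s).
    + intros x. unfold g. apply ble_antisym.
      * apply bigjoin_lub. intros Y HY. apply in_map_iff in HY as [y [<- Hy]].
        assert (H : proj1_sig (f x) y) by (apply Hgl; exists y; split; auto; apply ble_refl).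
        exact H.
      * destruct (U x) as [[G [PG [_ EG]]] _]. rewrite EG at 1. apply bigjoin_lub.
        intros Y HY. assert (H : proj1_sig (f x) (exist _ Y (PG Y HY))).
        { simpl. rewrite EG. apply bigjoin_ub; auto. }
        apply Hgl in H as [y [Hy Hle]]. eapply ble_trans; [exact Hle|].
        apply bigjoin_ub. apply in_map; auto.
    + intros A. apply fgl_ext. intros s. rewrite (Hgl A s). simpl. unfold g. split.
      * intros H. destruct (JP_gen U (proj1_sig s) _ (proj2_sig s) (GP _) H) as [Y [HY Hle]].
        apply in_map_iff in HY as [y [<- Hy]]. exists y; split; auto.
      * intros [y [Hy Hle]]. eapply ble_trans; [exact Hle|]. apply bigjoin_ub, in_map; auto.
Qed.

Theorem mainTheorem1 (M : bmodule) :
  (projective M <->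
     exists (S : Type) (le : S -> S -> Prop),
       is_poset S le /\ lower_finite S le /\ isomorphic M (freeB S le)) /\
  ((exists (S : Type) (le : S -> S -> Prop),
       is_poset S le /\ lower_finite S le /\ isomorphic M (freeB S le)) <->
     unique_irr_prim_decomp M /\ prim_lower_finite M).
Proof.
  assert (H21 : (exists (S : Type) (le : S -> S -> Prop),
       is_poset S le /\ lower_finite S le /\ isomorphic M (freeB S le)) -> projective M).
  { intros [S [le [PO [LF [f [g [fh [gf fg]]]]]]]].
    apply (proj_transport M (freeB S le) f g); auto. apply free_proj; auto. }
  split; split.
  - intros H. apply props_to_free, proj_to_props, H.
  - exact H21.
  - intros H. apply proj_to_props, H21, H.
  - apply props_to_free.
Qed.
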